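(* Let $\mathcal D_r$ be a Heegner divisor of even type. Then $\tilde k/2\notin M_r$, where $M_r$ is regarded as a subgroup of $A_{L_+}$ via the projection $M_r\subset A_{L_+}\oplus A_{\Lambda_r}\to A_{L_+}$.
   Context: Setting: $C=\{f=0\}$ a smooth plane quartic, $X_C=\{t^4=f\}\subset\mathbb P^3$, $\sigma(x:y:z:t)=(x:y:z:it)$, $\tau=\sigma^2$, $S_C=X_C/\langle\tau\rangle$ a degree 2 Del Pezzo surface with canonical class $k$, $\pi_2:X_C\to S_C$ the quotient, $\tilde k=\pi_2^*(k)$. $L_{K3}=H^2(X_C,\mathbb Z)\cong U^{\oplus3}\oplus E_8^{\oplus2}$, $L_\pm=\{x:\tau^*x=\pm x\}$, $L_+=\pi_2^*Pic(S_C)$, $A_{L}=L^*/L$ denotes discriminant groups. For a primitive $r\in L_-$ with $\Lambda_r=\langle r,\sigma^*r\rangle$ primitive in $L_-$: the Heegner divisor $\mathcal D_r$ is the image of $\{z\in B:(z,r)=0\}$ in the ball quotient $\mathcal M=B/\Gamma$ (where $B$ is the 6-ball of periods in the $i$-eigenspace of $\sigma^*$ on $L_-\otimes\mathbb C$ and $\Gamma$ the group of isometries of $L_-$ commuting with $\sigma^*$); its type is $n$ where $r^2=-2n$. $M_r=P/(L_+\oplus\Lambda_r)$, where $P$ is the orthogonal complement in $L_{K3}$ of the orthogonal complement of $\Lambda_r$ in $L_-$; $M_r$ embeds naturally in $A_{L_+}\oplus A_{\Lambda_r}$. *)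

(* Defs.v *)
(* Abstract lattice model of (H^2(X_C,Z), sigma^*, ktilde). *)
From HB Require Import structures.
From mathcomp Require Import all_boot all_order all_algebra.
Set Implicit Arguments.
Unset Strict Implicit.
Unset Printing Implicit Defensive.
Import Order.TTheory GRing.Theory Num.Theory.
Local Open Scope ring_scope.

Definition E8edge (a b : nat) : bool :=
  [|| (a == 0) && (b == 1), (a == 1) && (b == 2), (a == 2) && (b == 3),
      (a == 3) && (b == 4), (a == 4) && (b == 5), (a == 5) && (b == 6)
    | (a == 4) && (b == 7)]%N.

Definition E8neg (a b : nat) : int :=
  if a == b then -2 else if E8edge a b || E8edge b a then 1 else 0.

(* indices 0..5 : three hyperbolic planes U; 6..13 and 14..21 : two copies of E8(-1) *)
Definition K3entry (i j : nat) : int :=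
  if (i < 6)%N && (j < 6)%N then
    (if (i./2 == j./2) && (i != j) then 1 else 0)
  else if (6 <= i < 14)%N && (6 <= j < 14)%N then E8neg (i - 6) (j - 6)
  else if (14 <= i)%N && (14 <= j)%N then E8neg (i - 14) (j - 14)
  else 0.

Definition K3form : 'M[int]_22 := \matrix_(i, j) K3entry i j.

Definition bil (x y : 'cV[int]_22) : int := (x^T *m K3form *m y) 0 0.

Definition toQ (x : 'cV[int]_22) : 'cV[rat]_22 := map_mx (fun z : int => z%:~R) x.
Definition matQ (M : 'M[int]_22) : 'M[rat]_22 := map_mx (fun z : int => z%:~R) M.

(* basis l, e_1..e_7 :  l^2 = 1, e_i^2 = -1 *)
Definition I17 : 'M[int]_8 := \matrix_(i, j) (if i == j then (if i == 0 :> nat then 1 else -1) else 0).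
Definition kcan : 'cV[int]_8 := \col_i (if i == 0 :> nat then -3 else 1).
(* the Geiser involution x |-> -x + (x.k) k  (fixes k, -1 on k^perp) *)
Definition geiser : 'M[int]_8 := - 1%:M + kcan *m kcan^T *m I17.

Definition Lplus (sigma : 'M[int]_22) (x : 'cV[int]_22) : Prop := sigma ^+ 2 *m x = x.
Definition Lminus (sigma : 'M[int]_22) (x : 'cV[int]_22) : Prop := sigma ^+ 2 *m x = - x.

(* Standing setup: sigma = sigma^* is an isometry of L_K3 of order dividing 4,
   phi = pi_2^* : Pic(S_C) = I_{1,7} -> L_K3 multiplies the form by 2 and has
   image exactly L_+, and sigma acts on pi_2^* Pic(S_C) as the Geiser
   involution (sigma descends to the covering involution of S_C -> P^2). *)
Definition quartic_setup (sigma : 'M[int]_22) (phi : 'M[int]_(22, 8)) : Prop :=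
  [/\ sigma^T *m K3form *m sigma = K3form,
      sigma ^+ 4 = 1,
      phi^T *m K3form *m phi = 2%:R *: I17,
      (forall x, Lplus sigma x <-> exists y : 'cV[int]_8, x = phi *m y) &
      sigma *m phi = phi *m geiser].

Definition ktilde (phi : 'M[int]_(22, 8)) : 'cV[int]_22 := phi *m kcan.

Definition primitive_vec (S : 'cV[int]_22 -> Prop) (r : 'cV[int]_22) : Prop :=
  forall (m : int) (y : 'cV[int]_22), S y -> r = m *: y -> m = 1 \/ m = -1.

Definition Lam (sigma : 'M[int]_22) (r x : 'cV[int]_22) : Prop :=
  exists a b : int, x = a *: r + b *: (sigma *m r).

Definition primitive_in_Lminus (sigma : 'M[int]_22) (S : 'cV[int]_22 -> Prop) : Prop :=
  forall (m : int) (x : 'cV[int]_22), m != 0 -> Lminus sigma x -> S (m *: x) -> S x.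

Definition Lam_perp (sigma : 'M[int]_22) (r y : 'cV[int]_22) : Prop :=
  Lminus sigma y /\ bil y r = 0 /\ bil y (sigma *m r) = 0.

Definition Pset (sigma : 'M[int]_22) (r x : 'cV[int]_22) : Prop :=
  forall y, Lam_perp sigma r y -> bil x y = 0.

Definition LplusQ (sigma : 'M[int]_22) (a : 'cV[rat]_22) : Prop := matQ sigma ^+ 2 *m a = a.
Definition LamQ (sigma : 'M[int]_22) (r : 'cV[int]_22) (b : 'cV[rat]_22) : Prop :=
  exists al be : rat, b = al *: toQ r + be *: (matQ sigma *m toQ r).

(* the class of v in A_{L_+} = L_+^* / L_+ lies in the projection of
   M_r = P / (L_+ (+) Lambda_r) to A_{L_+}: some x in P decomposes as
   x = a + b with a in L_+^*, b in Lambda_r^*, and a = v mod L_+. *)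
Definition in_proj_Mr (sigma : 'M[int]_22) (r : 'cV[int]_22) (v : 'cV[rat]_22) : Prop :=
  exists x : 'cV[int]_22, Pset sigma r x /\
  exists a b : 'cV[rat]_22, [/\ LplusQ sigma a, LamQ sigma r b, toQ x = a + b &
     exists l : 'cV[int]_22, Lplus sigma l /\ a - v = toQ l].

(* Main.v *)
Require Import Defs.
From HB Require Import structures.
From mathcomp Require Import all_boot all_order all_algebra.
From mathcomp Require Import zify ring lra.
Import Order.TTheory GRing.Theory Num.Theory.
Local Open Scope ring_scope.

Definition Kq := matQ K3form.
Definition bQ (x y : 'cV[rat]_22) : rat := (x^T *m Kq *m y) 0 0.

Lemma bQDl x y z : bQ (x + y) z = bQ x z + bQ y z.
Proof. by rewrite /bQ linearD /= !mulmxDl mxE. Qed.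
Lemma bQDr x y z : bQ z (x + y) = bQ z x + bQ z y.
Proof. by rewrite /bQ mulmxDr mxE. Qed.
Lemma bQZl c x y : bQ (c *: x) y = c * bQ x y.
Proof. by rewrite /bQ linearZ /= -!scalemxAl mxE. Qed.
Lemma bQZr c x y : bQ x (c *: y) = c * bQ x y.
Proof. by rewrite /bQ -!scalemxAr mxE. Qed.
Lemma bQNl x y : bQ (- x) y = - bQ x y.
Proof. by rewrite -scaleN1r bQZl mulN1r. Qed.
Lemma bQNr x y : bQ x (- y) = - bQ x y.
Proof. by rewrite -scaleN1r bQZr mulN1r. Qed.
Lemma bQBl x y z : bQ (x - y) z = bQ x z - bQ y z.
Proof. by rewrite bQDl bQNl. Qed.
Lemma bQBr x y z : bQ z (x - y) = bQ z x - bQ z y.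
Proof. by rewrite bQDr bQNr. Qed.

Lemma toQ_mul m (A : 'M[int]_(22, m)) (y : 'cV[int]_m) :
  toQ (A *m y) = map_mx (fun z : int => z%:~R) A *m map_mx (fun z : int => z%:~R) y.
Proof. by rewrite /toQ map_mxM. Qed.

Lemma bQ_toQ x y : bQ (toQ x) (toQ y) = (bil x y)%:~R.
Proof. by rewrite /bQ /toQ /Kq /matQ map_trmx -!map_mxM mxE. Qed.

Lemma toQ_inj x y : toQ x = toQ y -> x = y.
Proof.
move=> H; apply/matrixP => i j.
by move/matrixP: H => /(_ i j); rewrite !mxE => /intr_inj.
Qed.

Lemma bQ_iso (sigma : 'M[int]_22) : sigma^T *m K3form *m sigma = K3form ->
  forall x y, bQ (matQ sigma *m x) (matQ sigma *m y) = bQ x y.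
Proof.
move=> H x y; rewrite /bQ trmx_mul.
have -> : x^T *m (matQ sigma)^T *m Kq *m (matQ sigma *m y) = x^T *m ((matQ sigma)^T *m Kq *m matQ sigma) *m y by rewrite !mulmxA.
by rewrite /Kq /matQ map_trmx -!map_mxM H.
Qed.

Lemma matQX (sigma : 'M[int]_22) : matQ sigma ^+ 2 = matQ (sigma ^+ 2).
Proof. by rewrite !expr2 -!mulmxE /matQ map_mxM. Qed.

Lemma K3sym_chk : all (fun i => all (fun j => K3entry i j == (if (i < j)%N then K3entry i j else if i == j then (if K3entry i i == 0 then 0 else -1) else 0) + (if (j < i)%N then K3entry j i else if i == j then (if K3entry i i == 0 then 0 else -1) else 0)) (iota 0 22)) (iota 0 22).
Proof. by []. Qed.

Lemma bil_even x : exists e : int, bil x x = 2 * e.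
Proof.
pose A : 'M[int]_22 := \matrix_(i, j) (if (i < j)%N then K3entry i j else if i == j then (if K3entry i i == 0 then 0 else -1) else 0).
have HK : K3form = A + A^T.
  apply/matrixP => i j; rewrite !mxE.
  have /allP H1 := K3sym_chk.
  have /allP H2 : all _ _ := H1 i ltac:(by rewrite mem_iota /= (ltn_ord i)).
  have /eqP := H2 j ltac:(by rewrite mem_iota /= (ltn_ord j)).
  case: (eqVneq i j) => [<-|ne]; first by rewrite !ltnn !eqxx.
  have ne' : (nat_of_ord i == nat_of_ord j) = false by apply/negbTE.
  have ne'' : (j == i) = false by rewrite eq_sym; apply/negbTE.
  by rewrite ?ne' ?ne''.
exists ((x^T *m A *m x) 0 0).
rewrite /bil HK mulmxDr mulmxDl mxE.
have -> : (x^T *m A^T *m x) = (x^T *m A *m x)^T by rewrite !trmx_mul trmxK mulmxA.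
have E : forall M : 'M[int]_1, M^T 0 0 = M 0 0 by move=> M; rewrite mxE.
rewrite E; ring. 
Qed.

Lemma kIk : (kcan^T *m I17 *m kcan) = 2%:M.
Proof.
apply/matrixP => i j; rewrite !ord1.
do 3 rewrite ?mxE ?big_ord_recl ?big_ord0.
by [].
Qed.

Lemma geiser_k : geiser *m kcan = kcan.
Proof.
rewrite /geiser mulmxDl mulNmx mul1mx -!mulmxA (mulmxA kcan^T) kIk mul_mx_scalar.
by rewrite scaler_nat mulr2n addKr.
Qed.

Lemma I17_sym : I17^T = I17.
Proof.
apply/matrixP => i j; rewrite !mxE eq_sym; case: eqP => // ->; done.
Qed.

Lemma bil_phi (phi : 'M[int]_(22, 8)) : phi^T *m K3form *m phi = 2%:R *: I17 ->
  forall u w, bil (phi *m u) (phi *m w) = 2 * (u^T *m I17 *m w) 0 0.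
Proof.
move=> H u w; rewrite /bil trmx_mul.
have -> : u^T *m phi^T *m K3form *m (phi *m w) = u^T *m (phi^T *m K3form *m phi) *m w by rewrite !mulmxA.
by rewrite H -scalemxAr -scalemxAl mxE.
Qed.

Lemma symI (u w : 'cV[int]_8) : (u^T *m I17 *m w) 0 0 = (w^T *m I17 *m u) 0 0.
Proof.
rewrite -{1}I17_sym.
have -> : u^T *m I17^T *m w = (w^T *m I17 *m u)^T by rewrite !trmx_mul trmxK mulmxA.
by rewrite mxE.
Qed.

Lemma kIk00 : (kcan^T *m I17 *m kcan) 0 0 = 2.
Proof. by rewrite kIk mxE. Qed.

Lemma toQB (u v : 'cV[int]_22) : toQ (u - v) = toQ u - toQ v.
Proof. by rewrite /toQ map_mxB. Qed.
Lemma toQD (u v : 'cV[int]_22) : toQ (u + v) = toQ u + toQ v.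
Proof. by rewrite /toQ map_mxD. Qed.
Lemma toQN (u : 'cV[int]_22) : toQ (- u) = - toQ u.
Proof. by rewrite /toQ map_mxN. Qed.
Lemma toQZ (c : int) (u : 'cV[int]_22) : toQ (c *: u) = c%:~R *: toQ u.
Proof. by rewrite /toQ map_mxZ. Qed.

Theorem lemma3p4 (sigma : 'M[int]_22) (phi : 'M[int]_(22, 8))
    (r : 'cV[int]_22) (n : nat) :
  quartic_setup sigma phi ->
  Lminus sigma r ->
  primitive_vec (Lminus sigma) r ->
  primitive_in_Lminus sigma (Lam sigma r) ->
  bil r r = - (2 * n)%:Z ->
  (0 < n)%N ->
  ~~ odd n ->
  ~ in_proj_Mr sigma r ((1 / 2 : rat) *: toQ (ktilde phi)).
Proof.
move=> [Hiso H4 Hphi HLp Hgei] Hr _ Hprim Hrr Hn Hev.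
move=> [x [_ [a [b [Ha Hb Hx [l [Hl Hal]]]]]]].
set Sq := matQ sigma.
have HS : forall u v : 'cV[rat]_22, bQ (Sq *m u) (Sq *m v) = bQ u v := @bQ_iso sigma Hiso.
have S2Q : forall v : 'cV[rat]_22, Sq ^+ 2 *m v = Sq *m (Sq *m v).
  by move=> v; rewrite mulmxA mulmxE -expr2.
have tQm : forall (A : 'M[int]_22) (v : 'cV[int]_22), toQ (A *m v) = matQ A *m toQ v.
  by move=> A v; rewrite toQ_mul.
have HrQ : Sq *m (Sq *m toQ r) = - toQ r.
  by rewrite -S2Q matQX -tQm Hr /toQ map_mxN.
have Ha2 : Sq *m (Sq *m a) = a by rewrite -S2Q.
have Hb2 : Sq *m (Sq *m b) = - b.
  have [al [be ->]] : exists al be : rat, b = al *: toQ r + be *: (Sq *m toQ r) := Hb.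
  have e1 : Sq *m (Sq *m (al *: toQ r)) = - (al *: toQ r) by rewrite -!scalemxAr HrQ scalerN.
  have e2 : Sq *m (Sq *m (be *: (Sq *m toQ r))) = - (be *: (Sq *m toQ r)).
    by rewrite -!scalemxAr -scalerN -mulmxN -HrQ.
  by rewrite !mulmxDr e1 opprD; congr (_ + _); exact: e2.
have Hab : bQ a b = 0.
  have := HS (Sq *m a) (Sq *m b); have := HS a b.
  rewrite Ha2 Hb2 bQNr => h1 h2; lra.
have Hba : bQ b a = 0.
  have := HS (Sq *m b) (Sq *m a); have := HS b a.
  rewrite Ha2 Hb2 bQNl => h1 h2; lra.
have [e He] := bil_even x.
have Hxx : (2 * e)%:~R = bQ a a + bQ b b.
  by rewrite -He -bQ_toQ Hx bQDl !bQDr Hab Hba addr0 add0r.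
have [y Hy] := (HLp l).1 Hl.
have Hkt : sigma *m ktilde phi = ktilde phi.
  by rewrite /ktilde mulmxA Hgei -mulmxA geiser_k.
set kt := ktilde phi.
have HaE : a = (1/2) *: toQ kt + toQ (phi *m y) by rewrite -Hy -Hal addrC subrK.
have Haa : bQ a a = (1 + 2 * (kcan^T *m I17 *m y) 0 0 + 2 * (y^T *m I17 *m y) 0 0)%:~R.
  rewrite HaE bQDl !bQDr !bQZl !bQZr !bQ_toQ /kt /ktilde !(@bil_phi phi Hphi) kIk00.
  rewrite (symI y kcan).
  by field.
have Hv : Sq *m ((1/2) *: toQ kt) = (1/2) *: toQ kt by rewrite -scalemxAr -tQm Hkt.
set z := sigma *m x - x - (sigma *m l - l).
have Hb' : b = toQ x - a by rewrite Hx addrAC subrr add0r.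
have Hc : Sq *m b - b = toQ z.
  rewrite Hb' HaE -Hy /z !toQB !tQm mulmxBr mulmxDr Hv.
  apply/matrixP => i j; rewrite !mxE; ring.
have Hc2 : bQ (toQ z) (toQ z) = 2 * bQ b b.
  rewrite -Hc bQBl !bQBr HS.
  have h := HS b (Sq *m b); rewrite Hb2 bQNr in h.
  lra.
have HzL : Lminus sigma z.
  apply: toQ_inj; rewrite tQm -matQX S2Q -Hc toQN -Hc !mulmxBr Hb2.
  by rewrite mulmxN opprK opprB addrC.
have [al [be Hbe]] : exists al be : rat, b = al *: toQ r + be *: (Sq *m toQ r) := Hb.
set p := - (al + be).
set q := al - be.
have Hc' : Sq *m b - b = p *: toQ r + q *: (Sq *m toQ r).
  have e4 : Sq *m b = al *: (Sq *m toQ r) - be *: toQ r.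
    rewrite Hbe mulmxDr -!scalemxAr HrQ scalerN addrC; done.
  rewrite e4 Hbe /p /q.
  apply/matrixP => i j; rewrite !mxE; ring.
set m : int := denq p * denq q.
have Hm0 : m != 0 by rewrite /m mulf_neq0 ?denq_neq0.
have HLam : Lam sigma r (m *: z).
  exists (numq p * denq q), (numq q * denq p).
  apply: toQ_inj.
  have E1 : toQ (m *: z) = m%:~R *: toQ z := toQZ m z.
  have E2 : toQ ((numq p * denq q) *: r + (numq q * denq p) *: (sigma *m r)) = (numq p * denq q)%:~R *: toQ r + (numq q * denq p)%:~R *: (Sq *m toQ r).
    by rewrite toQD !toQZ tQm.
  apply: (etrans E1); apply: esym; apply: (etrans E2).
  rewrite -Hc Hc' scalerDr !scalerA /m.
  congr (_ *: _ + _ *: _); rewrite !intrM numqE; ring.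
have [a0 [b0 Hz]] := Hprim m z Hm0 HzL HLam.
have HRR : bQ (toQ r) (toQ r) = (- (2 * n)%:Z)%:~R by rewrite bQ_toQ Hrr.
have HTT : bQ (Sq *m toQ r) (Sq *m toQ r) = bQ (toQ r) (toQ r) by rewrite HS.
have HRT : bQ (toQ r) (Sq *m toQ r) = - bQ (Sq *m toQ r) (toQ r).
  by rewrite -HS HrQ bQNr.
have Hzz : bQ (toQ z) (toQ z) = (a0%:~R ^+ 2 + b0%:~R ^+ 2) * (- (2 * n)%:Z)%:~R.
  rewrite Hz toQD !toQZ tQm bQDl !bQDr !bQZl !bQZr HTT HRT HRR; ring.
have Hbb : bQ b b = - ((n%:Z * (a0 ^+ 2 + b0 ^+ 2))%:~R).
  apply: (@mulfI _ 2); first by [].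
  rewrite -Hc2 Hzz; ring.
have Hint : ((2 * e) : int)%:~R = ((1 + 2 * (kcan^T *m I17 *m y) 0 0 + 2 * (y^T *m I17 *m y) 0 0) - (n%:Z * (a0 ^+ 2 + b0 ^+ 2)))%:~R :> rat.
  by rewrite Hxx Haa Hbb intrB.
move/intr_inj: Hint.
have Hn2 : n = (n./2).*2 by have := odd_double_half n; rewrite (negbTE Hev) add0n.
rewrite Hn2 -mul2n PoszM -mulrA.
set t := (_ * (_ + _)).
lia.
Qed.
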